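(* Consider the $q$-stage multistep Frank–Wolfe method (defined in the context) determined by $A\in\mathbb R^{q\times q}$, $\beta\in\mathbb R^q$, $\omega\in\mathbb R^q$ and $c>0$. For each $k\ge1$ define $\bar\gamma_i^{(k)}=\frac{c}{c+k+\omega_i}$, $\Gamma^{(k)}=\mathrm{diag}(\bar\gamma^{(k)}_1,\dots,\bar\gamma^{(k)}_q)$, $\mathbf P^{(k)}=\Gamma^{(k)}(I+A^T\Gamma^{(k)})^{-1}$ and $\mathbf z^{(k)}=q\,\mathbf P^{(k)}\beta\in\mathbb R^q$. If $0\le \mathbf z^{(k)}_i\le 1$ for all $i$ and all $k\ge1$, then $\mathbf x_0\in\mathcal D$ implies $\mathbf x_k\in\mathcal D$ for all $k\ge1$.
   Context: $\mathcal D\subset\mathbb R^n$ is nonempty, compact and convex, $f$ is differentiable, and $\mathrm{LMO}(x)$ denotes an element of $\arg\min_{s\in\mathcal D}\nabla f(x)^Ts$. The $q$-stage multistep Frank–Wolfe method with parameters $A$ (strictly lower triangular), $\beta$ (with $\sum_i\beta_i=1$), $\omega$ (with $\omega_1=0$) and $c>0$: given $\mathbf x_k$, compute successively for $i=1,\dots,q$ $\bar{\mathbf x}_i=\mathbf x_k+\sum_{j=1}^q A_{ij}\xi_j$, $\xi_i=\frac{c}{c+k+\omega_i}\big(\mathrm{LMO}(\bar{\mathbf x}_i)-\bar{\mathbf x}_i\big)$, and then set $\mathbf x_{k+1}=\mathbf x_k+\sum_{i=1}^q\beta_i\xi_i$. (This is the explicit Runge–Kutta discretization with unit step of $\dot x(t)=\frac{c}{c+t}(\mathrm{LMO}(x(t))-x(t))$.)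 *)

(* Defs.v *)
From HB Require Import structures.
From mathcomp Require Import all_boot all_order all_algebra.
From mathcomp Require Import all_classical all_reals all_analysis.
Set Implicit Arguments. Unset Strict Implicit. Unset Printing Implicit Defensive.
Import Order.TTheory GRing.Theory Num.Theory.
Import numFieldNormedType.Exports.
Local Open Scope classical_set_scope.
Local Open Scope ring_scope.

Section MultistepFW.
Variables (R : realType) (n q : nat).
Variables (A : 'M[R]_q) (beta omega : 'cV[R]_q) (c : R)
          (lmo : 'rV[R]_n -> 'rV[R]_n).

Definition mfw_gamma (k : nat) (i : 'I_q) : R := c / (c + k%:R + omega i 0).

Definition mfw_Gamma (k : nat) : 'M[R]_q := diag_mx (\row_i mfw_gamma k i).

Definition mfw_P (k : nat) : 'M[R]_q :=
  mfw_Gamma k *m invmx (1%:M + A^T *m mfw_Gamma k).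

Definition mfw_z (k : nat) : 'cV[R]_q := q%:R *: (mfw_P k *m beta).

(* One step k of the method from x = x_k.  Stage vectors xi_1..xi_q are
   stored as the rows of a q x n matrix; [mfw_stages k x m] has rows
   xi_1..xi_m filled in (rows >= m are 0). *)
Definition mfw_xbar (x : 'rV[R]_n) (Xi : 'M[R]_(q, n)) (i : 'I_q) : 'rV[R]_n :=
  x + \sum_(j < q) A i j *: row j Xi.

Definition mfw_xi (k : nat) (x : 'rV[R]_n) (Xi : 'M[R]_(q, n)) (i : 'I_q)
  : 'rV[R]_n :=
  mfw_gamma k i *: (lmo (mfw_xbar x Xi i) - mfw_xbar x Xi i).

Fixpoint mfw_stages (k : nat) (x : 'rV[R]_n) (m : nat) : 'M[R]_(q, n) :=
  match m with
  | 0 => 0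
  | m'.+1 =>
      let Xi := mfw_stages k x m' in
      \matrix_(i < q, j < n)
        (if nat_of_ord i == m' then mfw_xi k x Xi i 0 j else Xi i j)
  end.

Definition mfw_step (k : nat) (x : 'rV[R]_n) : 'rV[R]_n :=
  x + \sum_(i < q) beta i 0 *: row i (mfw_stages k x q).

Fixpoint mfw_iter (x0 : 'rV[R]_n) (k : nat) : 'rV[R]_n :=
  match k with
  | 0 => x0
  | k'.+1 => mfw_step k' (mfw_iter x0 k')
  end.

End MultistepFW.

(* Main.v *)
Require Import Defs.
From HB Require Import structures.
From mathcomp Require Import all_boot all_order all_algebra.
From mathcomp Require Import all_classical all_reals all_analysis.
Import Order.TTheory GRing.Theory Num.Theory.
Import numFieldNormedType.Exports.
Local Open Scope classical_set_scope.
Local Open Scope ring_scope.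

Lemma conv_pt (R : realType) (n : nat) (D : set 'rV[R]_n) :
  @convex_set R 'rV[R]_n D -> forall x y (p : R), 0 <= p -> p <= 1 ->
  D x -> D y -> D (p *: x + (1 - p) *: y).
Proof.
move=> cD x y p p0 p1 Dx Dy.
have := cD x y (Itv01 p0 p1) (mem_set Dx) (mem_set Dy).
by rewrite inE.
Qed.

Lemma conv_fin (R : realType) (n : nat) (D : set 'rV[R]_n) :
  @convex_set R 'rV[R]_n D -> forall m (w : 'I_m -> R) (s : 'I_m -> 'rV[R]_n) a,
  D a -> (forall i, D (s i)) -> (forall i, 0 <= w i) -> \sum_i w i <= 1 ->
  D (a + \sum_i w i *: (s i - a)).
Proof.
move=> cD; elim=> [|m IH] w s a Da Ds w0 w1.
  by rewrite big_ord0 addr0.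
rewrite big_ord_recl /=.
move: w1; rewrite big_ord_recl => w1.
have rest0 : 0 <= \sum_(i < m) w (lift ord0 i) by apply: sumr_ge0.
have [e1|lt1] := eqVneq (w ord0) 1.
  have r0 : \sum_(i < m) w (lift ord0 i) = 0.
    by apply/eqP; rewrite eq_le rest0 andbT; move: w1; rewrite e1 -lerBrDl subrr.
  have := psumr_eq0P (fun i _ => w0 (lift ord0 i)) r0 => z.
  rewrite big1 ?addr0; last by move=> i _; rewrite z // scale0r.
  by rewrite e1 scale1r addrC subrK.
have wl1 : w ord0 < 1 by rewrite lt_neqAle lt1 /= (le_trans _ w1) // lerDl.
set t := 1 - w ord0.
have t0 : 0 < t by rewrite subr_gt0.
have := IH (fun i => w (lift ord0 i) / t) (fun i => s (lift ord0 i)) a Da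
  (fun i => Ds _) (fun i => divr_ge0 (w0 _) (ltW t0)).
rewrite -mulr_suml ler_pdivrMr // mul1r lerBrDl => /(_ w1) Db.
have := @conv_pt _ _ _ cD _ _ _ (w0 ord0) (ltW wl1) (Ds ord0) Db.
congr D.
rewrite scalerDr scaler_sumr.
rewrite (eq_bigr (fun i => w (lift ord0 i) *: (s (lift ord0 i) - a))); last first.
  by move=> i _; rewrite scalerA mulrCA /t mulfV ?mulr1 // gt_eqF.
rewrite scalerBl scale1r scalerBr.
set S := \sum_(i < m) _.
set u := w ord0 *: s ord0. set v := w ord0 *: a.
by rewrite !addrA (addrC u a).
Qed.
Lemma stages_row (R : realType) (n q : nat) (A : 'M[R]_q) (omega : 'cV[R]_q) (c : R)
  (lmo : 'rV[R]_n -> 'rV[R]_n) k x m (i : 'I_q) : (i < m)%N ->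
  row i (mfw_stages A omega c lmo k x m) =
  mfw_xi A omega c lmo k x (mfw_stages A omega c lmo k x i) i.
Proof.
elim: m => [//|m IH] lt; apply/rowP => j.
rewrite /= mxE [in LHS]mxE.
case: eqP => [e|ne].
  by rewrite e mxE.
have lt' : (i < m)%N by rewrite ltnS leq_eqVlt in lt; case/orP: lt => // /eqP.
by rewrite -(IH lt') mxE.
Qed.

Lemma xbar_stages (R : realType) (n q : nat) (A : 'M[R]_q) (omega : 'cV[R]_q) (c : R)
  (lmo : 'rV[R]_n -> 'rV[R]_n) k x (i : 'I_q) :
  (forall i j : 'I_q, (i <= j)%N -> A i j = 0) ->
  mfw_xbar A x (mfw_stages A omega c lmo k x i) i =
  mfw_xbar A x (mfw_stages A omega c lmo k x q) i.
Proof.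
move=> Alow; rewrite /mfw_xbar; congr (_ + _); apply: eq_bigr => j _.
case: (ltnP j i) => [lt|le]; last by rewrite Alow // !scale0r.
by rewrite !stages_row.
Qed.

Lemma stages_final (R : realType) (n q : nat) (A : 'M[R]_q) (omega : 'cV[R]_q) (c : R)
  (lmo : 'rV[R]_n -> 'rV[R]_n) k x (i : 'I_q) :
  (forall i j : 'I_q, (i <= j)%N -> A i j = 0) ->
  row i (mfw_stages A omega c lmo k x q) =
  mfw_xi A omega c lmo k x (mfw_stages A omega c lmo k x q) i.
Proof.
move=> Alow; rewrite stages_row //.
by rewrite /mfw_xi xbar_stages.
Qed.
Lemma step_eq (R : realType) (n q : nat) (A : 'M[R]_q) (beta omega : 'cV[R]_q) (c : R)
  (lmo : 'rV[R]_n -> 'rV[R]_n) k x :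
  (forall i j : 'I_q, (i <= j)%N -> A i j = 0) ->
  mfw_step A beta omega c lmo k x =
  x + \sum_i (mfw_P A omega c k *m beta) i 0 *:
     (lmo (mfw_xbar A x (mfw_stages A omega c lmo k x q) i) - x).
Proof.
move=> Alow.
set Xi := mfw_stages A omega c lmo k x q.
set s := fun i => lmo (mfw_xbar A x Xi i).
set Y : 'M[R]_(q, n) := \matrix_(i, j) (s i - x) 0 j.
set G := mfw_Gamma omega c k.
have E1 : (1%:M + G *m A) *m Xi = G *m Y.
  apply/matrixP => i j.
  rewrite mulmxDl mul1mx -mulmxA /G /mfw_Gamma !mul_diag_mx !mxE.
  have := congr1 (fun M : 'rV[R]_n => M 0 j) (@stages_final R n q A omega c lmo k x i Alow).
  rewrite -/Xi mxE => ->.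
  rewrite /mfw_xi /mfw_xbar -/Xi !mxE summxE.
  rewrite (eq_bigr (fun k0 => A i k0 * Xi k0 j)); last by move=> k0 _; rewrite !mxE.
  by rewrite -mulrDr /s /mfw_xbar; congr (_ * _); rewrite opprD addrA subrK.
set N := 1%:M + A^T *m G.
have NT : N^T = 1%:M + G *m A.
  by rewrite /N linearD /= trmx1 trmx_mul trmxK /G /mfw_Gamma tr_diag_mx.
have U : N^T \in unitmx.
  rewrite unitmxE det_trig.
    rewrite big1 ?unitr1 // => i _.
    by rewrite NT /G /mfw_Gamma mul_diag_mx !mxE eqxx Alow // mulr0 addr0.
  apply/is_trig_mxP => i j lt.
  rewrite NT /G /mfw_Gamma mul_diag_mx !mxE Alow ?(ltnW lt) // mulr0 addr0.
  have -> : (i == j) = false by apply/negbTE/eqP => e; move: lt; rewrite e ltnn.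
  by [].
have Hw : (mfw_P A omega c k *m beta)^T = beta^T *m invmx (N^T) *m G.
  by rewrite /mfw_P -/G -/N !trmx_mul trmx_inv /G /mfw_Gamma tr_diag_mx mulmxA.
have Hs : beta^T *m Xi = (mfw_P A omega c k *m beta)^T *m Y.
  rewrite Hw -[_ *m G *m Y]mulmxA -E1 -NT mulmxA -[beta^T *m _ *m _]mulmxA.
  by rewrite mulVmx // mulmx1.
rewrite /mfw_step -/Xi; congr (_ + _).
transitivity (beta^T *m Xi).
  by rewrite mulmx_sum_row; apply: eq_bigr => i _; rewrite mxE.
rewrite Hs mulmx_sum_row; apply: eq_bigr => i _; rewrite mxE; congr (_ *: _).
by apply/rowP => j; rewrite !mxE.
Qed.

Theorem proposition1 (R : realType) (n q : nat)
  (D : set 'rV[R]_n) (f : 'rV[R]_n -> R) (lmo : 'rV[R]_n -> 'rV[R]_n)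
  (A : 'M[R]_q) (beta omega : 'cV[R]_q) (c : R) (x0 : 'rV[R]_n) :
  D !=set0 -> compact D -> @convex_set R 'rV[R]_n D ->
  (forall x, differentiable f x) ->
  (forall x, D (lmo x) /\ (forall s, D s -> 'd f x (lmo x) <= 'd f x s)) ->
  (forall i j : 'I_q, (i <= j)%N -> A i j = 0) ->
  \sum_(i < q) beta i 0 = 1 ->
  (forall i : 'I_q, nat_of_ord i = 0%N -> omega i 0 = 0) ->
  0 < c ->
  (forall (k : nat) (i : 'I_q),
      0 <= mfw_z A beta omega c k i 0 <= 1) ->
  D x0 ->
  forall k : nat, (1 <= k)%N -> D (mfw_iter A beta omega c lmo x0 k).
Proof.
move=> _ _ cD _ hlmo Alow sb _ _ hz Dx0 k _.
have q0 : (0 < q)%N.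
  rewrite lt0n; apply/negP => /eqP e.
  move: sb; rewrite big1 => [|[i hi] _]; last by exfalso; move: hi; rewrite e.
  by move/eqP; rewrite eq_sym oner_eq0.
have qn0 : (q%:R : R) != 0 by rewrite pnatr_eq0 -lt0n.
elim: k => [//|k IH] /=.
rewrite step_eq //.
have wE : forall i, (mfw_P A omega c k *m beta) i 0 = mfw_z A beta omega c k i 0 / q%:R.
  by move=> i; rewrite /mfw_z [in RHS]mxE [q%:R * _]mulrC mulfK.
apply: (@conv_fin R n D cD) => //.
- by move=> i; case: (hlmo (mfw_xbar A (mfw_iter A beta omega c lmo x0 k)
    (mfw_stages A omega c lmo k (mfw_iter A beta omega c lmo x0 k) q) i)).
- move=> i; rewrite wE; case/andP: (hz k i) => h0 _.
  by rewrite divr_ge0 // ler0n.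
- apply: (@le_trans _ _ (\sum_(i < q) (q%:R : R)^-1)).
    apply: ler_sum => i _; rewrite wE; case/andP: (hz k i) => _ h1.
    by rewrite -[X in _ <= X]mul1r ler_wpM2r // invr_ge0 ler0n.
  by rewrite sumr_const card_ord -[_ *+ q]mulr_natr mulVf.
Qed.
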